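(* Let $\mathcal{M}$ be a graph matroid family with rank function $r$. (a) $\mathcal{M}$ is unbounded if and only if every forest is $\mathcal{M}$-independent. (b) If $\mathcal{M}$ is bounded, then the graph consisting of $r(\mathcal{M})+1$ pairwise vertex-disjoint edges is an $\mathcal{M}$-circuit.
   Context: All graphs are finite and simple and have no isolated vertices. A graph matroid family $\mathcal{M}$ assigns to every graph $G$ a matroid $\mathcal{M}(G)$ on $E(G)$ such that (i) every graph isomorphism $V(G)\to V(H)$ induces an isomorphism $\mathcal{M}(G)\to\mathcal{M}(H)$, and (ii) for every subgraph $H$ of $G$, $\mathcal{M}(H)$ is the restriction of $\mathcal{M}(G)$ to $E(H)$. $r(G)$ is the rank of $\mathcal{M}(G)$. $G$ is $\mathcal{M}$-independent if $r(G)=|E(G)|$; an $\mathcal{M}$-circuit is a graph $C$ with $r(C)<|E(C)|$ and $r(C-e)=|E(C)|-1$ for all edges $e$. $\mathcal{M}$ is unbounded if $r(K_n)$ is unbounded in $n$, and bounded otherwise; in the bounded case $r(\mathcal{M})=\lim_n r(K_n)$. *)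

(* Defs.v *)
From HB Require Import structures.
From mathcomp Require Import all_boot all_order.
From mathcomp Require Import finmap.
Set Implicit Arguments. Unset Strict Implicit. Unset Printing Implicit Defensive.
Local Open Scope fset_scope.

(* A finite simple graph without isolated vertices, with vertices labelled by
   natural numbers, is determined by its edge set: a finite set of
   2-element subsets of nat. *)
Definition edge := {fset nat}.
Definition graph := {fset edge}.

Definition is_graph (G : graph) : Prop := forall e, e \in G -> #|` e| = 2.

Definition is_vertex (G : graph) (v : nat) : Prop := exists2 e, e \in G & v \in e.

Definition eimage (f : nat -> nat) (e : edge) : edge := [fset f x | x in e].
Definition gimage (f : nat -> nat) (G : graph) : graph :=
  [fset eimage f e | e in G].

Definition matroid_on (E : graph) (I : graph -> bool) : Prop :=
  [/\ I fset0,
      (forall A B, A `<=` E -> B `<=` A -> I A -> I B) &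
      (forall A B, A `<=` E -> B `<=` E -> I A -> I B -> #|` A| < #|` B| ->
         exists2 e, e \in B `\` A & I (e |` A))].

Definition graph_matroid_family (indep : graph -> graph -> bool) : Prop :=
  [/\ (forall G, is_graph G -> matroid_on G (indep G)),
      (forall G H (f : nat -> nat), is_graph G -> is_graph H ->
         (forall u v, is_vertex G u -> is_vertex G v -> f u = f v -> u = v) ->
         gimage f G = H ->
         forall F, F `<=` G -> indep G F = indep H (gimage f F)) &
      (forall G H, is_graph G -> is_graph H -> H `<=` G ->
         forall F, F `<=` H -> indep H F = indep G F)].

Definition rank (indep : graph -> graph -> bool) (G : graph) : nat :=
  \max_(F <- fpowerset G | indep G F) #|` F|.

Definition Kn (n : nat) : graph :=
  [fset ([fset i; j] : edge) | i in [fset x | x in iota 0 n],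
     j in [fset x | x in iota 0 n] & i != j].

Definition matching (k : nat) : graph :=
  [fset ([fset i.*2; i.*2.+1] : edge) | i in [fset x | x in iota 0 k]].

Definition unbounded (indep : graph -> graph -> bool) : Prop :=
  forall k, exists n, k <= rank indep (Kn n).

Definition bounded indep : Prop := ~ unbounded indep.

Definition rank_limit indep (rM : nat) : Prop :=
  exists N, forall n, N <= n -> rank indep (Kn n) = rM.

Definition has_cycle (G : graph) : Prop :=
  exists s : seq nat, [/\ 3 <= size s, uniq s & cycle (fun u v => [fset u; v] \in G) s].

Definition forest (G : graph) : Prop := ~ has_cycle G.

Definition M_independent indep (G : graph) : Prop := rank indep G = #|` G|.

Definition M_circuit indep (C : graph) : Prop :=
  rank indep C < #|` C| /\
  forall e, e \in C -> rank indep (C `\ e) = #|` C| - 1.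

(* Main.v *)
Require Import Defs.
From mathcomp Require Import all_boot all_order finmap.
From Stdlib Require Import Classical.
From mathcomp Require Import zify.
Set Implicit Arguments. Unset Strict Implicit. Unset Printing Implicit Defensive.
Local Open Scope fset_scope.


Definition Ig (indep : graph -> graph -> bool) (G : graph) : bool := indep G G.

Lemma edge2 (e : edge) : #|` e| = 2 -> exists a b, a != b /\ e = [fset a; b].
Proof.
move=> he.
have : e != fset0 by rewrite -cardfs_eq0 he.
case/fset0Pn=> a ae.
have h1 : #|` e `\ a| = 1 by move: he; rewrite (cardfsD1 a) ae add1n => -[].
have /cardfs1P [b hb] : #|` e `\ a| == 1 by rewrite h1.
exists a, b; split.
  apply/negP=> /eqP ab; have : b \in e `\ a by rewrite hb fset11.
  by rewrite -ab in_fsetD1 eqxx.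
by rewrite -(fsetD1K ae) hb.
Qed.

Lemma is_graph_sub G H : is_graph G -> H `<=` G -> is_graph H.
Proof. by move=> hG /fsubsetP hs e /hs /hG. Qed.

Lemma is_graphU G H : is_graph G -> is_graph H -> is_graph (G `|` H).
Proof. by move=> hG hH e /fsetUP [/hG|/hH]. Qed.

Lemma is_graph1U (e : edge) G : #|` e| = 2 -> is_graph G -> is_graph (e |` G).
Proof. by move=> he hG x /fset1UP [->|/hG]. Qed.

Lemma is_graph0 : is_graph fset0.
Proof. by move=> e; rewrite in_fset0. Qed.

Section Fam.
Variable indep : graph -> graph -> bool.
Hypothesis Hf : graph_matroid_family indep.

Lemma I0 : Ig indep fset0.
Proof. by case: Hf => /(_ fset0 is_graph0) [] . Qed.

Lemma Isub G H : is_graph G -> Ig indep G -> H `<=` G -> Ig indep H.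
Proof.
move=> hG iG hHG; case: Hf => hm _ hr.
rewrite /Ig (hr G H hG (is_graph_sub hG hHG) hHG H (fsubset_refl _)).
by case: (hm G hG) => _ /(_ G H (fsubset_refl _) hHG iG).
Qed.

Lemma Iaug A B : is_graph A -> is_graph B -> Ig indep A -> Ig indep B ->
  #|` A| < #|` B| -> exists2 e, e \in B `\` A & Ig indep (e |` A).
Proof.
move=> hA hB iA iB lt; case: Hf => hm _ hr.
have hG := is_graphU hA hB.
have sA := fsubsetUl A B; have sB := fsubsetUr A B.
have iA' : indep (A `|` B) A by rewrite -(hr _ A hG hA sA A (fsubset_refl _)).
have iB' : indep (A `|` B) B by rewrite -(hr _ B hG hB sB B (fsubset_refl _)).
case: (hm _ hG) => _ _ /(_ A B sA sB iA' iB' lt) [e he ie].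
exists e => //.
have seA : e |` A `<=` A `|` B.
  rewrite fsubUset sA fsub1set; case/fsetDP: he => he _.
  by rewrite in_fsetU he orbT.
by rewrite /Ig (hr _ _ hG (is_graph_sub hG seA) seA _ (fsubset_refl _)).
Qed.

Lemma Iiso G (f : nat -> nat) : is_graph G ->
  (forall u v, is_vertex G u -> is_vertex G v -> f u = f v -> u = v) ->
  Ig indep G = Ig indep (gimage f G).
Proof.
move=> hG inj; case: Hf => _ hi _.
have hH : is_graph (gimage f G).
  move=> e /imfsetP [e0 he0 ->].
  have [a [b [ab E]]] := edge2 (hG _ he0); rewrite E in he0 *.
  rewrite /eimage imfset_fset2 cardfs2; case: eqP => // fab.
  have va : is_vertex G a by exists [fset a; b] => //; exact: fset21.
  have vb : is_vertex G b by exists [fset a; b] => //; exact: fset22.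
  by rewrite (inj a b va vb fab) eqxx in ab.
exact: (hi G _ f hG hH inj erefl G (fsubset_refl _)).
Qed.

End Fam.


Lemma eimage_fix (f : nat -> nat) (e : edge) :
  (forall x, x \in e -> f x = x) -> eimage f e = e.
Proof.
move=> h; apply/fsetP => x; apply/imfsetP/idP => [[y hy ->]|hx]; first by rewrite h.
by exists x; rewrite ?h.
Qed.

Lemma gimage_fix (f : nat -> nat) (G : graph) :
  (forall x, is_vertex G x -> f x = x) -> gimage f G = G.
Proof.
move=> h; have he : forall e, e \in G -> eimage f e = e.
  by move=> e he; apply: eimage_fix => x hx; apply: h; exists e.
move=> {h}; apply/fsetP => x; apply/imfsetP/idP => [[y hy ->]|hx]; first by rewrite he.
by exists x; rewrite ?he.
Qed.

Lemma gimageU1 f (e : edge) G : gimage f (e |` G) = eimage f e |` gimage f G.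
Proof. by rewrite /gimage imfsetU1. Qed.

Lemma eimage2 f a b : eimage f [fset a; b] = [fset f a; f b].
Proof. by rewrite /eimage imfset_fset2. Qed.

Definition swap (a b x : nat) := if x == a then b else if x == b then a else x.

Lemma swapK a b : involutive (swap a b).
Proof.
move=> x; rewrite /swap.
case: (eqVneq x a) => [->|xa]; first by rewrite eqxx; case: eqVneq.
case: (eqVneq x b) => [->|xb]; first by rewrite eqxx.
by rewrite (negbTE xa) (negbTE xb).
Qed.

Lemma swap_inj a b : injective (swap a b).
Proof. exact: inv_inj (swapK a b). Qed.

Lemma swapL a b : swap a b a = b. Proof. by rewrite /swap eqxx. Qed.
Lemma swapR a b : swap a b b = a.
Proof. by rewrite /swap eqxx; case: eqVneq => // ->. Qed.
Lemma swapO a b x : x != a -> x != b -> swap a b x = x.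
Proof. by rewrite /swap => /negbTE -> /negbTE ->. Qed.

Lemma vertexU1 (e : edge) G x : is_vertex (e |` G) x -> x \in e \/ is_vertex G x.
Proof. by case=> e' /fset1UP [-> | he'] hx; [left | right; exists e']. Qed.

Lemma Irelabel indep (Hf : graph_matroid_family indep) (F0 : graph) (g h : edge) (f : nat -> nat) :
  is_graph (g |` F0) -> Ig indep (g |` F0) -> injective f ->
  (forall x, is_vertex F0 x -> f x = x) -> eimage f g = h -> Ig indep (h |` F0).
Proof.
move=> hG iG inj fix_ eh.
rewrite (Iiso Hf hG (f := f)) in iG; last by move=> u v _ _; apply: inj.
by rewrite gimageU1 eh gimage_fix in iG.
Qed.

Lemma ex_max (P : nat -> Prop) a B : P a -> (forall n, P n -> n <= B) ->
  exists m, P m /\ forall n, P n -> n <= m.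
Proof.
move=> Pa hB.
have : forall d a, B - a <= d -> P a -> exists m, P m /\ forall n, P n -> n <= m.
  elim=> [|d IH] a' hd Pa'.
    exists a'; split=> // n Pn; have := hB n Pn; have := hB a' Pa'.
    move: hd; rewrite leqn0 subn_eq0 => h1 h2 h3; exact: leq_trans h3 h1.
  case: (classic (exists n, P n /\ a' < n)) => [[n [Pn lt]]|nex].
    have hn : B - n <= d by lia.
    exact: IH n hn Pn.
  exists a'; split=> // n Pn; rewrite leqNgt; apply/negP => lt; apply: nex; by exists n.
by move=> /(_ B a); apply => //; apply: leq_subr.
Qed.

Section Span.
Variable indep : graph -> graph -> bool.
Hypothesis Hf : graph_matroid_family indep.

Definition spans (T : graph) (g : edge) := g \in T \/ ~~ Ig indep (g |` T).

Lemma span_trans (T S : graph) (f : edge) :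
  is_graph T -> is_graph S -> #|` f| = 2 -> Ig indep T -> Ig indep S ->
  (forall g, g \in S -> spans T g) -> ~~ Ig indep (f |` S) -> spans T f.
Proof.
move=> gT gS f2 iT iS hS nfS.
case: (boolP (f \in T)) => fT; [by left | right; apply/negP => iTf].
pose P n := exists J : graph, [/\ J `<=` T `|` S, S `<=` J, Ig indep J & #|` J| = n].
have PS : P #|` S| by exists S; split; rewrite ?fsubsetUr ?fsubset_refl.
have hB : forall n, P n -> n <= #|` T `|` S|.
  by move=> n [J [sJ _ _ <-]]; apply: fsubset_leq_card.
have gTS := is_graphU gT gS.
have [m [[J [sJ SJ iJ cJ]] mmax]] := ex_max PS hB.
have gJ := is_graph_sub gTS sJ.
have leJT : #|` J| <= #|` T|.
  rewrite leqNgt; apply/negP => lt.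
  have [g /fsetDP [gJ' gT'] ig] := Iaug Hf gT gJ iT iJ lt.
  have gS' : g \in S by move/fsubsetP: sJ => /(_ g gJ') /fsetUP [] //; rewrite (negbTE gT').
  by case: (hS g gS') => [|/negP]; [rewrite (negbTE gT')|].
have gfT := is_graph1U f2 gT.
have lt : #|` J| < #|` f |` T| by rewrite cardfsU1 fT add1n ltnS.
have [g /fsetDP [gfT' gJ'] ig] := Iaug Hf gJ gfT iJ iTf lt.
case/fset1UP: gfT' => [eg | gT'].
  rewrite eg in ig; move/negP: nfS; apply.
  apply: (Isub Hf (is_graph1U f2 gJ) ig).
  by rewrite fsubUset fsub1set fset1U1 /= (fsubset_trans SJ) ?fsubsetU1.
have : P (#|` J|.+1).
  exists (g |` J); split => //.
  - by rewrite fsubUset fsub1set sJ in_fsetU gT'.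
  - exact: fsubset_trans SJ (fsubsetU1 _ _).
  - by rewrite cardfsU1 gJ'.
by move/mmax; rewrite cJ ltnn.
Qed.

End Span.


Lemma in_V n x : (x \in [fset y | y in iota 0 n]) = (x < n).
Proof. by rewrite in_fset /= mem_iota. Qed.

Lemma card_V n : #|` [fset y | y in iota 0 n]| = n.
Proof. by rewrite card_imfset //= undup_id ?iota_uniq ?size_iota. Qed.

Lemma in_Vs m n x : (x \in [fset y | y in iota m n]) = (m <= x < m + n).
Proof. by rewrite in_fset /= mem_iota. Qed.

Lemma card_Vs m n : #|` [fset y | y in iota m n]| = n.
Proof. by rewrite card_imfset //= undup_id ?iota_uniq ?size_iota. Qed.

Lemma Kn_mem n e : e \in Kn n ->
  exists i j, [/\ i < n, j < n, i != j & e = [fset i; j]].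
Proof.
case/imfset2P => i /= hi [j]; rewrite /= inE /=; move: hi; rewrite !in_fset /= !mem_iota /=.
by move=> hi /andP [hj ij] ->; exists i, j.
Qed.

Lemma Kn_in n i j : i < n -> j < n -> i != j -> [fset i; j] \in Kn n.
Proof.
have hV : forall x, x < n -> x \in [fset x | x in iota 0 n] by move=> x hx; rewrite in_fset /= mem_iota.
move=> hi hj ij; apply/imfset2P; exists i; first exact: hV.
exists j => //; rewrite /= inE /= ij andbT; exact: hV.
Qed.

Lemma Kn_graph n : is_graph (Kn n).
Proof. by move=> e /Kn_mem [i [j [_ _ ij ->]]]; rewrite cardfs2 ij. Qed.

Definition vbound (G : graph) : nat := \max_(e <- G) \max_(x <- e) x.

Lemma vbound_ge G x : is_vertex G x -> x <= vbound G.
Proof.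
case=> e he hx; apply: leq_trans (_ : \max_(x <- e) x <= _).
  exact: (leq_bigmax_seq (F := fun y => y) x hx isT).
exact: (leq_bigmax_seq (F := fun e : edge => \max_(x <- e) x) e he isT).
Qed.

Definition star (u : nat) (L : {fset nat}) : graph := [fset ([fset u; x] : edge) | x in L].

Lemma star_mem u L e : e \in star u L -> exists2 x, x \in L & e = [fset u; x].
Proof. by case/imfsetP => x hx ->; exists x. Qed.

Lemma star_in u L x : x \in L -> [fset u; x] \in star u L.
Proof. by move=> hx; apply/imfsetP; exists x. Qed.

Lemma star_graph u L : u \notin L -> is_graph (star u L).
Proof.
move=> uL e /star_mem [x hx ->]; rewrite cardfs2; case: eqVneq => // ux.
by rewrite ux hx in uL.
Qed.

Lemma star_card u L : u \notin L -> #|` star u L| = #|` L|.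
Proof.
move=> uL; rewrite card_in_imfset //= => x y hx hy e.
have : y \in [fset u; x] by rewrite e fset22.
rewrite in_fset2 => /orP [/eqP yu|/eqP //]; by rewrite -yu hy in uL.
Qed.

Lemma star0 u : star u fset0 = fset0.
Proof. by rewrite /star imfset0. Qed.

Lemma starU1 u y L : star u (y |` L) = [fset u; y] |` star u L.
Proof. by rewrite /star imfsetU1. Qed.

Lemma star_vertex u L x : is_vertex (star u L) x -> x = u \/ x \in L.
Proof.
case=> e /star_mem [y hy ->]; rewrite in_fset2 => /orP [/eqP ->|/eqP ->]; by [left|right].
Qed.

Lemma gimage_star f u L : gimage f (star u L) = star (f u) (f @` L).
Proof.
apply/fsetP => e; apply/imfsetP/imfsetP => [[e0 /star_mem [x hx ->] ->]|[y /imfsetP [x hx ->] ->]].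
  by exists (f x); [apply/imfsetP; exists x | rewrite eimage2].
by exists [fset u; x]; [apply: star_in | rewrite eimage2].
Qed.

Lemma star_iso indep (Hf : graph_matroid_family indep) u L u' L' :
  u \notin L -> u' \notin L' -> #|` L| = #|` L'| ->
  Ig indep (star u L) = Ig indep (star u' L').
Proof.
move=> uL uL' cL.
pose f x := if x == u then u' else nth u' (enum_fset L') (index x (enum_fset L)).
have fL : forall x, x \in L -> f x \in L'.
  move=> x hx; rewrite /f; case: eqVneq => [xu|_]; first by move: hx; rewrite xu (negbTE uL).
  apply: mem_nth; rewrite -cL index_mem; exact: hx.
have finj : {in L &, injective f}.
  move=> x y hx hy; rewrite /f.
  case: eqVneq => [xu|_]; first by move: hx; rewrite xu (negbTE uL).
  case: eqVneq => [yu|_]; first by move: hy; rewrite yu (negbTE uL).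
  move/eqP; rewrite nth_uniq ?fset_uniq // -?cL ?index_mem // => /eqP e.
  by rewrite -(nth_index u (s := enum_fset L) hx) e nth_index.
have fu : f u = u' by rewrite /f eqxx.
have fLL : f @` L = L'.
  apply/eqP; rewrite eqEfcard; apply/andP; split.
    by apply/fsubsetP => y /imfsetP [x hx ->]; apply: fL.
  by rewrite card_in_imfset //= cL.
rewrite (Iiso Hf (f := f) (star_graph uL)) ?gimage_star ?fu ?fLL //.
move=> x y /star_vertex [->|hx] /star_vertex [->|hy] //.
- by rewrite fu => e; have := fL y hy; rewrite -e (negbTE uL').
- by rewrite fu => e; have := fL x hx; rewrite e (negbTE uL').
- exact: finj.
Qed.

Section Rank.
Variable indep : graph -> graph -> bool.
Hypothesis Hf : graph_matroid_family indep.

Lemma restr G F : is_graph G -> F `<=` G -> indep G F = Ig indep F.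
Proof.
move=> hG sF; case: Hf => _ _ hr.
by rewrite /Ig (hr G F hG (is_graph_sub hG sF) sF F (fsubset_refl _)).
Qed.

Lemma rank_ge_sub G F : is_graph G -> F `<=` G -> Ig indep F -> #|` F| <= rank indep G.
Proof.
move=> hG sF iF; rewrite /rank.
have hF : F \in fpowerset G by rewrite fpowersetE.
have iF' : indep G F by rewrite restr.
exact: (leq_bigmax_seq (P := indep G) (F := fun F : graph => #|` F|) F hF iF').
Qed.

Lemma rank_le G m : is_graph G ->
  (forall F, F `<=` G -> Ig indep F -> #|` F| <= m) -> rank indep G <= m.
Proof.
move=> hG h; apply/bigmax_leqP_seq => F; rewrite fpowersetE => sF.
by rewrite restr // => /(h F sF).
Qed.

Lemma rank_card G : is_graph G -> Ig indep G -> rank indep G = #|` G|.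
Proof.
move=> hG iG; apply/eqP; rewrite eqn_leq rank_ge_sub ?fsubset_refl // andbT.
by apply: rank_le => // F sF _; apply: fsubset_leq_card.
Qed.

Lemma rank_mono H G : is_graph G -> H `<=` G -> rank indep H <= rank indep G.
Proof.
move=> hG sH; apply: rank_le; first exact: is_graph_sub sH.
move=> F sF iF; apply: rank_ge_sub => //; exact: fsubset_trans sH.
Qed.

Lemma rank_witness G : is_graph G ->
  exists F, [/\ F `<=` G, Ig indep F & #|` F| = rank indep G].
Proof.
move=> hG; apply: NNPP => hn.
have h : forall F, F `<=` G -> Ig indep F -> #|` F| <= (rank indep G).-1.
  move=> F sF iF; have := rank_ge_sub hG sF iF.
  rewrite leq_eqVlt => /orP [/eqP e|lt]; first by case: hn; exists F.
  by rewrite -ltnS prednK // (leq_ltn_trans _ lt).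
have := rank_le hG h.
have := h fset0 (fsub0set _) (I0 Hf); rewrite cardfs0.
case: (rank indep G) hn => [|k] hn _ /=; last by rewrite ltnn.
by move=> _; apply: hn; exists fset0; rewrite fsub0set (I0 Hf) cardfs0.
Qed.

End Rank.


Lemma fset2C (a b : nat) : [fset a; b] = [fset b; a].
Proof. by apply/fsetP => x; rewrite !in_fset2 orbC. Qed.

Section Stars.
Variable indep : graph -> graph -> bool.
Hypothesis Hf : graph_matroid_family indep.
Hypothesis hU : unbounded indep.

Lemma stars_good j : forall u L, u \notin L -> #|` L| = j -> Ig indep (star u L).
Proof.
elim: j => [|j IH] u L uL cL.
  by move/cardfs0_eq: cL => ->; rewrite star0; apply: I0.
case: (boolP (Ig indep (star u L))) => // nb; exfalso.
have bad : forall u' L', u' \notin L' -> #|` L'| = j.+1 -> ~~ Ig indep (star u' L').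
  by move=> u' L' uL' cL'; rewrite -(star_iso Hf uL uL') ?cL.
pose V0 := [fset y | y in iota 0 j.+1].
pose K := Kn j.+1.
pose P n := exists T, [/\ T `<=` K, Ig indep T & #|` T| = n].
have P0 : P 0 by exists fset0; rewrite fsub0set (I0 Hf) cardfs0.
have hB : forall n, P n -> n <= #|` K| by move=> n [T [sT _ <-]]; apply: fsubset_leq_card.
have [m [[T [sT iT cT]] mmax]] := ex_max P0 hB.
have gT : is_graph T := is_graph_sub (@Kn_graph j.+1) sT.
have hT : forall g, g \in K -> spans indep T g.
  move=> g gK; case: (boolP (g \in T)) => gT'; [by left | right; apply/negP => ig].
  have : P m.+1.
    exists (g |` T); split => //; first by rewrite fsubUset fsub1set gK sT.
    by rewrite cardfsU1 gT' cT.
  by move/mmax; rewrite ltnn.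
have inV0 : forall x, (x \in V0) = (x < j.+1) by move=> x; rewrite /V0 in_V.
have step1 : forall x y, x < j.+1 -> x != y -> spans indep T [fset x; y].
  move=> x y hx xy; case: (ltnP y j.+1) => hy; first by apply: hT; apply: Kn_in.
  have xS : x \notin V0 `\ x by rewrite in_fsetD1 eqxx.
  have cS : #|` V0 `\ x| = j.
    by move: (card_V j.+1); rewrite (cardfsD1 x) inV0 hx add1n => -[].
  apply: (span_trans Hf gT (star_graph xS)); rewrite ?cardfs2 ?xy //.
  - exact: IH xS cS.
  - move=> g /star_mem [z hz ->]; apply: hT; move: hz; rewrite in_fsetD1 inV0 => /andP [zx hz].
    by apply: Kn_in; rewrite // eq_sym.
  - rewrite -starU1; apply: bad.
      by rewrite in_fset1U negb_or xS andbT.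
    by rewrite cardfsU1 cS in_fsetD1 inV0 ltnNge hy andbF.
have step2 : forall y z, j.+1 <= y -> j.+1 <= z -> y != z -> spans indep T [fset y; z].
  move=> y z hy hz yz.
  pose V1 := [fset v | v in iota 0 j].
  have inV1 : forall x, (x \in V1) = (x < j) by move=> x; rewrite /V1 in_V.
  have yV1 : y \notin V1 by rewrite inV1 -leqNgt ltnW.
  apply: (span_trans Hf gT (star_graph yV1)); rewrite ?cardfs2 ?yz //.
  - by apply: IH yV1 _; rewrite card_V.
  - move=> g /star_mem [v hv ->]; rewrite fset2C; apply: step1.
      by rewrite inV1 in hv; apply: ltnW.
    by apply/eqP => e; move: hv; rewrite inV1 e ltnNge ltnW.
  - rewrite -starU1; apply: bad.
      by rewrite in_fset1U negb_or yz yV1.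
    by rewrite cardfsU1 card_V inV1 ltnNge ltnW.
have all : forall e, #|` e| = 2 -> spans indep T e.
  move=> e /edge2 [a [b [ab ->]]].
  case: (ltnP a j.+1) => ha; first exact: step1.
  case: (ltnP b j.+1) => hb; first by rewrite fset2C; apply: step1; rewrite // eq_sym.
  exact: step2.
have bnd : forall n, rank indep (Kn n) <= #|` T|.
  move=> n; apply: (rank_le Hf (@Kn_graph n)) => F sF iF.
  rewrite leqNgt; apply/negP => lt.
  have [g /fsetDP [gF gT'] ig] := Iaug Hf gT (is_graph_sub (@Kn_graph n) sF) iT iF lt.
  case: (all g (@Kn_graph n _ (fsubsetP sF g gF))) => [|/negP]; by [rewrite (negbTE gT')|].
have [n hn] := hU #|` T|.+1.
by have := leq_trans hn (bnd n); rewrite ltnn.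
Qed.

End Stars.


Definition adj (G : graph) := fun u v : nat => [fset u; v] \in G.

Lemma forest_sub H G : H `<=` G -> forest G -> forest H.
Proof.
move=> /fsubsetP sH fG [s [h3 hu hc]]; apply: fG; exists s; split => //.
by apply: sub_cycle hc => u v /sH.
Qed.

Lemma path_vert G x p : path (adj G) x p -> forall y, y \in p -> is_vertex G y.
Proof.
elim: p x => [//|y p IH] x /= /andP [hxy hp] z; rewrite inE => /orP [/eqP ->|hz].
  by exists [fset x; y] => //; apply: fset22.
exact: IH hp z hz.
Qed.

Lemma edge_at (e : edge) x : #|` e| = 2 -> x \in e -> exists w, x != w /\ e = [fset x; w].
Proof.
move=> /edge2 [a [b [ab ->]]]; rewrite in_fset2 => /orP [/eqP ->|/eqP ->].
  by exists b.
by exists a; rewrite eq_sym ab fset2C.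
Qed.

Lemma leaf F : is_graph F -> forest F -> F != fset0 ->
  exists u v, [/\ [fset u; v] \in F, u != v & ~ is_vertex (F `\ [fset u; v]) v].
Proof.
move=> gF fF /fset0Pn [e0 he0].
have [a [b [ab E]]] := edge2 (gF _ he0); rewrite E in he0.
pose P n := exists x p, [/\ size p = n, 0 < n, uniq (x :: p) & path (adj F) x p].
have P1 : P 1 by exists a, [:: b]; rewrite /= inE ab /adj he0.
have hB : forall n, P n -> n <= (vbound F).+1.
  move=> n [x [p [<- _ hu hp]]].
  have hup : uniq p by case/andP: hu.
  have := @uniq_leq_size _ p (iota 0 (vbound F).+1) hup; rewrite size_iota.
  apply=> y hy; rewrite mem_iota /= ltnS; apply: vbound_ge; exact: path_vert hp y hy.
have [m [[x [p [sp mpos hu hp]]] mmax]] := ex_max P1 hB.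
case: p sp hu hp => [|p0 p'] sp; first by rewrite -sp in mpos.
move=> hu hp; have hp' := hp; move: hp' => /= /andP [hx0 hpp].
exists p0, x; split.
- by rewrite fset2C.
- by apply/eqP => e; move: hu; rewrite /= e inE eqxx.
case=> e' /fsetD1P [ne he'] xe'.
have [w [xw ew]] := edge_at (gF _ he') xe'.
have wp0 : w != p0 by apply/eqP => wp; rewrite ew wp fset2C eqxx in ne.
case: (boolP (w \in x :: p0 :: p')) => hw.
  have wp : w \in p0 :: p' by move: hw; rewrite inE eq_sym (negbTE xw).
  pose q := p0 :: p'; pose i := index w q.
  have hi : i < size q by rewrite index_mem.
  have i1 : 0 < i by rewrite /i /q /= eq_sym (negbTE wp0).
  have ei : index w q = i by [].
  clearbody i.
  apply: fF; exists (x :: take i.+1 q); split.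
  - have : 2 <= size (take i.+1 q) by rewrite size_take; case: ifP => _; lia.
    by move=> h2; exact: h2.
  - have hux : x \notin q by case/andP: hu.
    have huq : uniq q by case/andP: hu.
    rewrite cons_uniq take_uniq // andbT; apply/negP => /mem_take hx; by rewrite hx in hux.
  have ht : take i.+1 q = rcons (take i q) w by rewrite (take_nth w) // -ei nth_index.
  change (path (adj F) x (rcons (take i.+1 q) x)).
  rewrite rcons_path ht last_rcons; apply/andP; split.
    rewrite -ht; move: hp; rewrite -[p0 :: p'](cat_take_drop i.+1) cat_path.
    by case/andP.
  by rewrite /adj fset2C -ew.
have : P m.+1.
  exists w, [:: x, p0 & p']; split => //; first by rewrite -sp.
    by rewrite cons_uniq hw hu.
  by rewrite -cat1s cat_path hp andbT /= andbT /adj fset2C -ew.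
by move/mmax; rewrite ltnn.
Qed.


Section Forest.
Variable indep : graph -> graph -> bool.
Hypothesis Hf : graph_matroid_family indep.
Hypothesis hU : unbounded indep.

Lemma Ext F0 u v : is_graph F0 -> Ig indep F0 -> u != v -> ~ is_vertex F0 v ->
  Ig indep ([fset u; v] |` F0).
Proof.
move=> gF iF uv nv.
pose M := (vbound F0 + u + v + 1)%N.
pose L := [fset y | y in iota M (#|` F0|.+1)].
have inL : forall y, (y \in L) = (M <= y < M + #|` F0|.+1)%N by move=> y; rewrite /L in_Vs.
have uL : u \notin L by rewrite inL negb_and -ltnNge; apply/orP; left; rewrite /M; lia.
have iS := stars_good Hf hU uL erefl.
have cS : #|` F0| < #|` star u L| by rewrite star_card // /L card_Vs.
have [g /fsetDP [gS gF0] ig] := Iaug Hf gF (star_graph uL) iF iS cS.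
have [w wL eg] := star_mem gS.
have Mw : M <= w by move: wL; rewrite inL => /andP [].
have uw : u != w by apply/eqP => e; move: uL; rewrite e wL.
have gg : is_graph (g |` F0) by apply: is_graph1U; rewrite // eg cardfs2 uw.
apply: (@Irelabel indep Hf F0 g [fset u; v] (swap w v) gg ig (@swap_inj w v)).
  move=> x hx; apply: swapO.
    by apply/eqP => e; have := vbound_ge hx; rewrite e /M; lia.
  by apply/eqP => e; apply: nv; rewrite -e.
rewrite eg eimage2 swapL swapO //.
Qed.

Lemma forest_indep n : forall F : graph, #|` F| = n -> is_graph F -> forest F -> Ig indep F.
Proof.
elim: n => [|n IH] F cF gF fF.
  by move/cardfs0_eq: cF => ->; apply: I0.
have nz : F != fset0 by rewrite -cardfs_eq0 cF.
have [u [v [he uv nv]]] := leaf gF fF nz.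
have iF0 : Ig indep (F `\ [fset u; v]).
  apply: IH; first by move: cF; rewrite (cardfsD1 [fset u; v]) he add1n => -[].
    exact: is_graph_sub gF (fsubsetDl _ _).
  exact: forest_sub (fsubsetDl _ _) fF.
have := Ext (is_graph_sub gF (fsubsetDl _ _)) iF0 uv nv.
by rewrite fsetD1K.
Qed.

End Forest.

Definition pdisj (G : graph) := forall e1 e2 x, e1 \in G -> e2 \in G -> x \in e1 -> x \in e2 -> e1 = e2.

Lemma pdisj_forest G : pdisj G -> forest G.
Proof.
move=> hd [[|a [|b [|c r]]] [//= _ hu hc]].
move: hc => /= /andP [hab /andP [hbc _]].
have e := hd _ _ b hab hbc (fset22 _ _) (fset21 _ _).
have : c \in [fset a; b] by rewrite e fset22.
rewrite in_fset2 => /orP [/eqP ca|/eqP cb].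
  by move: hu; rewrite ca /= !inE eqxx; case: (a == b); case: (a \in r).
by move: hu; rewrite cb /= !inE eqxx; case: (a == b); case: (b \in r); case: (a \in r).
Qed.


Lemma match_mem k e : e \in matching k -> exists2 i, i < k & e = [fset i.*2; i.*2.+1].
Proof. by case/imfsetP => i; rewrite /= in_V => hi ->; exists i. Qed.

Lemma match_in k i : i < k -> [fset i.*2; i.*2.+1] \in matching k.
Proof. by move=> hi; apply/imfsetP; exists i; rewrite //= in_V. Qed.

Lemma half_eq (i j x : nat) : x \in [fset i.*2; i.*2.+1] -> x \in [fset j.*2; j.*2.+1] -> i = j.
Proof. rewrite !in_fset2; case/orP => /eqP -> /orP [] /eqP; lia. Qed.

Lemma match_graph k : is_graph (matching k).
Proof. by move=> e /match_mem [i _ ->]; rewrite cardfs2; case: eqP => //; lia. Qed.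

Lemma match_card k : #|` matching k| = k.
Proof.
rewrite card_in_imfset /=.
  have := card_V k; by rewrite /=.
move=> i j _ _ e; apply: (@half_eq i j i.*2); first exact: fset21.
rewrite -e; exact: fset21.
Qed.

Lemma match_pdisj k : pdisj (matching k).
Proof.
move=> e1 e2 x /match_mem [i _ ->] /match_mem [j _ ->] h1 h2.
by rewrite (half_eq h1 h2).
Qed.

Lemma pdisj_sub H G : H `<=` G -> pdisj G -> pdisj H.
Proof. by move=> /fsubsetP s hd e1 e2 x /s h1 /s h2; apply: hd. Qed.

Lemma match_sub_Kn k n : k.*2 <= n -> matching k `<=` Kn n.
Proof.
move=> hk; apply/fsubsetP => e /match_mem [i hi ->]; apply: Kn_in; lia.
Qed.

Lemma eimage_inj f : injective f -> injective (eimage f).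
Proof.
move=> inj e1 e2 E; apply/fsetP => x.
by rewrite -(mem_imfset imfset_key (mem e1) inj) -(mem_imfset imfset_key (mem e2) inj) -/(eimage f e1) E.
Qed.

Lemma gimage_graph f G : injective f -> is_graph G -> is_graph (gimage f G).
Proof.
move=> inj gG e /imfsetP [e0 he0 ->].
have [a [b [ab ->]]] := edge2 (gG _ he0).
by rewrite eimage2 cardfs2 inj_eq // ab.
Qed.

Lemma gimage_card f G : injective f -> #|` gimage f G| = #|` G|.
Proof. by move=> inj; rewrite card_imfset //= ; apply: eimage_inj. Qed.


Lemma Mlem indep (Hf : graph_matroid_family indep) r N :
  (forall n, N <= n -> rank indep (Kn n) = r) ->
  forall m (A : graph), #|` A| = m -> is_graph A -> pdisj A -> m <= r -> Ig indep A.
Proof.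
move=> hN; elim=> [|m IH] A cA gA dA mr.
  by move/cardfs0_eq: cA => ->; apply: I0.
have /fset0Pn [f hf] : A != fset0 by rewrite -cardfs_eq0 cA.
have sA0 : A `\ f `<=` A := fsubsetDl _ _.
have gA0 := is_graph_sub gA sA0.
have iA0 : Ig indep (A `\ f).
  apply: IH => //; last exact: ltnW.
    by move: cA; rewrite (cardfsD1 f) hf add1n => -[].
  exact: pdisj_sub sA0 dA.
have cA0 : #|` A `\ f| = m by move: cA; rewrite (cardfsD1 f) hf add1n => -[].
have [F [sF iF cF]] := rank_witness Hf (@Kn_graph N).
rewrite (hN N (leqnn _)) in cF.
have gF := is_graph_sub (@Kn_graph N) sF.
pose K := (vbound A).+1.
have injK : injective (addn K) := @addnI K.
have gF' := gimage_graph injK gF.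
have iF' : Ig indep (gimage (addn K) F).
  by rewrite -(Iiso Hf gF) // => u v _ _; apply: injK.
have lt : #|` A `\ f| < #|` gimage (addn K) F| by rewrite gimage_card // cF cA0.
have [g /fsetDP [gF'' gA0'] ig] := Iaug Hf gA0 gF' iA0 iF' lt.
case/imfsetP: gF'' => e0 he0 eg.
have [a [b [ab E0]]] := edge2 (gF _ he0).
rewrite E0 eimage2 in eg.
have [c [d [cd Ef]]] := edge2 (gA _ hf).
have cK : c < K by rewrite /K ltnS; apply: vbound_ge; exists f => //; rewrite Ef fset21.
have dK : d < K by rewrite /K ltnS; apply: vbound_ge; exists f => //; rewrite Ef fset22.
pose s x := swap (K + a)%N c (swap (K + b)%N d x).
have sinj : injective s by move=> x y /swap_inj /swap_inj.
have gg : is_graph (g |` (A `\ f)).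
  by apply: is_graph1U gA0; rewrite eg cardfs2 eqn_add2l ab.
have nKa : forall x, x < K -> x != (K + a)%N.
  by move=> x xK; rewrite neq_ltn (leq_trans xK (leq_addr _ _)).
have nKb : forall x, x < K -> x != (K + b)%N.
  by move=> x xK; rewrite neq_ltn (leq_trans xK (leq_addr _ _)).
have sa : s ((K + a)%N) = c.
  rewrite /s (@swapO (K + b)%N d (K + a)%N) ?swapL //; first by rewrite eqn_add2l.
  by rewrite eq_sym nKa.
have sb : s ((K + b)%N) = d.
  rewrite /s swapL swapO //; first by rewrite nKa.
  by rewrite eq_sym.
have := @Irelabel indep Hf (A `\ f) g f s gg ig sinj.
rewrite fsetD1K //; apply; last by rewrite eg eimage2 sa sb Ef.
move=> x [e he hx].
have xK : x < K by rewrite /K ltnS; apply: vbound_ge; exists e => //; apply: (fsubsetP sA0).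
have ef : e != f by case/fsetD1P: he.
have xcd : x \notin f.
  apply/negP => xf; move/eqP: ef; apply.
  by apply: (dA e f x) => //; apply: (fsubsetP sA0).
rewrite Ef in_fset2 negb_or in xcd; case/andP: xcd => xc xd.
by rewrite /s (@swapO (K + b)%N d x) ?(@swapO (K + a)%N c x) ?nKa ?nKb.
Qed.

Theorem lemma2p4 (indep : graph -> graph -> bool) :
  graph_matroid_family indep ->
  (unbounded indep <-> (forall G, is_graph G -> forest G -> M_independent indep G)) /\
  (bounded indep -> forall rM, rank_limit indep rM ->
     M_circuit indep (matching rM.+1)).
Proof.
move=> Hf; split; first split.
- move=> hU G gG fG; rewrite /M_independent (rank_card Hf gG) //.
  exact: (forest_indep Hf hU erefl gG fG).
- move=> h k; exists k.*2.
  have gM := @match_graph k.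
  have := h _ gM (pdisj_forest (@match_pdisj k)); rewrite /M_independent match_card => e; rewrite -{1}e.
  exact: (rank_mono Hf (@Kn_graph _) (match_sub_Kn (leqnn _))).
- move=> _ r [N hN]; split.
    rewrite match_card.
    have := rank_mono Hf (@Kn_graph (N + r.+1.*2)%N) (match_sub_Kn (leq_addl N _)).
    by rewrite hN ?leq_addr.
  move=> e he.
  have s := fsubsetDl (matching r.+1) [fset e].
  have ce : #|` matching r.+1 `\ e| = r.
    by move: (match_card r.+1); rewrite (cardfsD1 e) he add1n => -[].
  have gC := is_graph_sub (@match_graph r.+1) s.
  rewrite (rank_card Hf gC) ?ce ?match_card ?subn1 //.
  exact: (Mlem Hf hN ce gC (pdisj_sub s (@match_pdisj _)) (leqnn _)).
Qed.
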